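(* The Poincar\'e series of $\mathrm{Kh}_{alg}(3,\infty;\mathbb{Q})$ is $$P_{3,\infty}(q,t)=\frac{(1+q^{10}t^5)(1+q^2+q^4t^2)}{1-q^6t^4}+q^8t^3.$$
   Context: For $n\ge1$, $A_n(\mathbb{Q})=\mathbb{Q}[x_0,\dots,x_{n-1}]\otimes\Lambda[\xi_0,\dots,\xi_{n-1}]$ is the free graded-commutative algebra on even $x_k$ (of $q$-degree $2k+2$, $t$-degree $2k$) and odd $\xi_k$ (of $q$-degree $2k+4$, $t$-degree $2k+1$), with $d_2$ the odd derivation given by $d_2(x_k)=0$, $d_2(\xi_k)=\sum_{i=0}^k x_ix_{k-i}$. $\mathrm{Kh}_{alg}(n,\infty;\mathbb{Q})=H(A_n(\mathbb{Q}),d_2)$, and its Poincar\'e series is $\sum_{a,b}\dim \mathrm{Kh}_{alg}^{a,b}\,q^at^b$ ($a$ = $q$-degree, $b$ = $t$-degree). *)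

(* Defs.v *)
From HB Require Import structures.
From mathcomp Require Import all_boot all_order all_algebra.
Set Implicit Arguments. Unset Strict Implicit. Unset Printing Implicit Defensive.
Import Order.TTheory GRing.Theory Num.Theory.

(* A monomial x_0^{e_0} ... x_{n-1}^{e_{n-1}} * xi_{k_1} ... xi_{k_m}
   (k_1 < ... < k_m, the indices k with s_k = true), encoded as (e, s)
   with e : seq nat, s : seq bool of length n.  These monomials form the
   standard Q-basis of the free graded-commutative algebra A_n(Q). *)
Definition mono := (seq nat * seq bool)%type.

Definition qdeg (n : nat) (m : mono) : nat :=
  sumn [seq nth 0 m.1 k * (2 * k + 2) + nth false m.2 k * (2 * k + 4) | k <- iota 0 n].
Definition tdeg (n : nat) (m : mono) : nat :=
  sumn [seq nth 0 m.1 k * (2 * k) + nth false m.2 k * (2 * k + 1) | k <- iota 0 n].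

Fixpoint exps_all (n B : nat) : seq (seq nat) :=
  if n is n'.+1 then [seq i :: s | i <- iota 0 B.+1, s <- exps_all n' B] else [:: [::]].
Fixpoint bools_all (n : nat) : seq (seq bool) :=
  if n is n'.+1 then [seq c :: s | c <- [:: false; true], s <- bools_all n'] else [:: [::]].

(* the monomial basis of the bigraded piece A_n^{a,b} (q-degree a, t-degree b);
   since every x_k has q-degree >= 2, exponents are bounded by a *)
Definition basis (n a b : nat) : seq mono :=
  [seq m <- [seq (e, s) | e <- exps_all n a, s <- bools_all n]
     | (qdeg n m == a) && (tdeg n m == b)].

(* d_2 on a basis monomial, as a list of (coefficient, monomial) terms:
   d_2 is an odd derivation with d_2 x_k = 0, d_2 xi_k = sum_{i=0}^k x_i x_{k-i}, so
   d_2(x^e xi_{k_1}...xi_{k_m}) = sum_j (-1)^(j-1) x^e (sum_i x_i x_{k_j - i})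
                                     xi_{k_1}..^{xi_{k_j}}..xi_{k_m}. *)
Definition d2 (n : nat) (m : mono) : seq (rat * mono) :=
  let S := [seq k <- iota 0 n | nth false m.2 k] in
  flatten [seq
     [seq (((-1) ^+ j)%R, (incr_nth (incr_nth m.1 i) (nth 0 S j - i),
                          set_nth false m.2 (nth 0 S j) false))
       | i <- iota 0 (nth 0 S j).+1]
   | j <- iota 0 (size S)].

Definition coef (l : seq (rat * mono)) (m' : mono) : rat :=
  (\sum_(p <- l | p.2 == m') p.1)%R.

Definition dflt_mono : mono := ([::], [::]).

Definition tgt (n a b : nat) : seq mono :=
  if b is b'.+1 then basis n a b' else [::].

(* matrix of d_2 : A_n^{a,b} -> A_n^{a,b-1}, row-vector convention
   (row i = coordinates of d_2 of the i-th basis monomial) *)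
Definition dmat (n a b : nat) : 'M[rat]_(size (basis n a b), size (tgt n a b)) :=
  \matrix_(i, j) coef (d2 n (nth dflt_mono (basis n a b) i)) (nth dflt_mono (tgt n a b) j).

(* dim_Q Kh_alg^{a,b}(n, oo; Q) = dim ker(d_2 on A^{a,b}) - dim im(d_2 : A^{a,b+1} -> A^{a,b}) *)
Definition Khdim (n a b : nat) : nat :=
  (\rank (kermx (dmat n a b)) - \rank (dmat n a b.+1))%N.

Definition bser := nat -> nat -> int.
Definition smono (c : int) (i j : nat) : bser :=
  fun a b => if (a == i) && (b == j) then c else 0%R.
Definition sadd (F G : bser) : bser := fun a b => (F a b + G a b)%R.
Definition smul (F G : bser) : bser :=
  fun a b => (\sum_(i < a.+1) \sum_(j < b.+1) F i j * G (a - i)%N (b - j)%N)%R.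
(* 1/(1 - q^i t^j) = sum_{m>=0} q^{i m} t^{j m}, for (i,j) <> (0,0) *)
Definition sgeom (i j : nat) : bser :=
  fun a b => if [exists m : 'I_(a + b).+1, (a == i * m)%N && (b == j * m)%N] then 1%R else 0%R.

Definition P3 : bser :=
  sadd (smul (smul (sadd (smono 1 0 0) (smono 1 10 5))
                   (sadd (sadd (smono 1 0 0) (smono 1 2 0)) (smono 1 4 2)))
             (sgeom 6 4))
       (smono 1 8 3).

(* Main.v *)
Require Import Defs.
From HB Require Import structures.
From mathcomp Require Import all_boot all_order all_algebra.
From mathcomp Require Import zify ring lra.
Set Implicit Arguments. Unset Strict Implicit. Unset Printing Implicit Defensive.
Import Order.TTheory GRing.Theory Num.Theory.

Module PM1.

Definition mk (e0 e1 e2 : nat) (s0 s1 s2 : bool) : mono := ([:: e0; e1; e2], [:: s0; s1; s2]).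
Definition shape3 (m : mono) := (size m.1 == 3%N) && (size m.2 == 3%N).

Lemma shape3P m : shape3 m -> exists e0 e1 e2 s0 s1 s2, m = mk e0 e1 e2 s0 s1 s2.
Proof.
case: m => [[|e0 [|e1 [|e2 [|? ?]]]] [|s0 [|s1 [|s2 [|? ?]]]]] //= _.
by exists e0, e1, e2, s0, s1, s2.
Qed.

Lemma mk_eq a0 a1 a2 b0 b1 b2 c0 c1 c2 d0 d1 d2 :
  (mk a0 a1 a2 b0 b1 b2 == mk c0 c1 c2 d0 d1 d2) =
  [&& a0 == c0, a1 == c1, a2 == c2, b0 == d0, b1 == d1 & b2 == d2].
Proof. by rewrite /mk xpair_eqE !eqseq_cons !andbT !andbA. Qed.

Lemma qdegE e0 e1 e2 s0 s1 s2 :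
  qdeg 3 (mk e0 e1 e2 s0 s1 s2) = (2*e0 + 4*e1 + 6*e2 + 4*s0 + 6*s1 + 8*s2)%N.
Proof. rewrite /qdeg /=; case: s0; case: s1; case: s2 => /=; lia. Qed.

Lemma tdegE e0 e1 e2 s0 s1 s2 :
  tdeg 3 (mk e0 e1 e2 s0 s1 s2) = (2*e1 + 4*e2 + s0 + 3*s1 + 5*s2)%N.
Proof. rewrite /tdeg /=; case: s0; case: s1; case: s2 => /=; lia. Qed.

Lemma mem_exps n B s : (s \in exps_all n B) = (size s == n) && all (fun x => x <= B) s.
Proof.
elim: n s => [|n IH] s; first by case: s.
apply/allpairsP/idP.
  case=> [[x y] [hx hy ->]]; rewrite mem_iota in hx; rewrite IH in hy.
  case/andP: hy => /eqP hy ha; rewrite /= in hy ha *; rewrite hy eqxx ha andbT; by case/andP: hx => _; rewrite add0n ltnS.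
case: s => [|x s] // H; rewrite /= eqSS in H; case/and3P: H => hs hx ha; exists (x, s).
by rewrite mem_iota IH hs ha add0n ltnS hx.
Qed.

Lemma mem_bools n s : (s \in bools_all n) = (size s == n).
Proof.
elim: n s => [|n IH] s; first by case: s.
apply/allpairsP/idP.
  by case=> [[x y] [hx hy ->]]; rewrite /= eqSS -IH.
case: s => [|x s] // hs; rewrite /= eqSS in hs; exists (x, s); split => //.
  by case: x.
by rewrite IH.
Qed.

Lemma uniq_exps n B : uniq (exps_all n B).
Proof.
elim: n => [|n IH] //; apply: allpairs_uniq => //; first exact: iota_uniq.
by case=> [x s] [y t] _ _ /= [-> ->].
Qed.

Lemma uniq_bools n : uniq (bools_all n).
Proof.
elim: n => [|n IH] //; apply: allpairs_uniq => //.
by case=> [x s] [y t] _ _ /= [-> ->].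
Qed.

Lemma uniq_basis a b : uniq (basis 3 a b).
Proof.
apply: filter_uniq; apply: allpairs_uniq; [exact: uniq_exps|exact: uniq_bools|].
by case=> [x s] [y t] _ _ /= [-> ->].
Qed.

Lemma mem_basis a b m :
  (m \in basis 3 a b) = [&& shape3 m, qdeg 3 m == a & tdeg 3 m == b].
Proof.
rewrite /basis mem_filter; apply/andP/idP.
  case=> /andP[/eqP qa /eqP tb] /allpairsP [[e s] [he hs em]]; subst m.
  rewrite mem_exps in he; rewrite mem_bools in hs.
  case/andP: he => he _.
  by rewrite /shape3 /= he hs qa tb !eqxx.
case/and3P => hsh hq ht; split; first by rewrite hq ht.
apply/allpairsP; exists m; split => //; last by case: m {hq ht} hsh.
  case: (shape3P hsh) hq => [e0 [e1 [e2 [s0 [s1 [s2 ->]]]]]].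
  rewrite qdegE mem_exps => /eqP <-.
  rewrite /= !andbT; apply/and3P; split; lia.
by move: hsh; rewrite mem_bools => /andP[].
Qed.

End PM1.
Import PM1.

Module PM2.

Definition E (m : mono) k := nth 0%N m.1 k.
Definition Sb (m : mono) k := nth false m.2 k.
Definition isUp m := [|| Sb m 0, (E m 0 <= 1) && Sb m 2 |
   [&& ~~ Sb m 2, Sb m 1, E m 0 == 0 & E m 1 == 0]].
Definition isDown m := ~~ Sb m 0 && ((2 <= E m 0) || (~~ Sb m 2 &&
   ((2 <= E m 1) || [&& ~~ Sb m 1, E m 0 == 1 & E m 1 == 1]))).
Definition isCrit m := ~~ isUp m && ~~ isDown m.
Definition pt m :=
  if Sb m 0 then mk (E m 0).+2 (E m 1) (E m 2) false (Sb m 1) (Sb m 2)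
  else if Sb m 2 then mk (E m 0) (E m 1).+2 (E m 2) false (Sb m 1) false
  else mk (E m 0).+1 (E m 1).+1 (E m 2) false false false.
Definition ipt m :=
  if 2 <= E m 0 then mk (E m 0 - 2) (E m 1) (E m 2) true (Sb m 1) (Sb m 2)
  else if 2 <= E m 1 then mk (E m 0) (E m 1 - 2) (E m 2) false (Sb m 1) true
  else mk 0 0 (E m 2) false true false.
Definition lv m := if Sb m 0 then 0 else if Sb m 2 then (if E m 0 == 1 then 1 else 2) else 0.

Arguments E m k /.
Arguments Sb m k /.
Arguments mk e0 e1 e2 s0 s1 s2 /.

Ltac dest H := case: (shape3P H) => [e0 [e1 [e2 [s0 [s1 [s2 ->]]]]]].

Ltac splitH := repeat match goal with
 | H : is_true (_ && _) |- _ => case/andP: H => ? ?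
 | H : is_true (_ == _) |- _ => move/eqP: H => ?
 | H : is_true false |- _ => by []
 | H : is_true (_ || _) |- _ => case/orP: H => ?
 end; subst.

Ltac boolcase := repeat match goal with b : bool |- _ => case: b end.

Lemma shape3_mk e0 e1 e2 s0 s1 s2 : shape3 (mk e0 e1 e2 s0 s1 s2).
Proof. by []. Qed.

Lemma up_down m : isUp m -> ~~ isDown m.
Proof.
rewrite /isUp /isDown; case: (Sb m 0) => //=.
case: (Sb m 2) => /=; case: (Sb m 1) => /=; try lia.
Qed.

Section S.
Variable m : mono.
Hypothesis Hm : shape3 m.

Lemma pt_shape : shape3 (pt m).
Proof. by rewrite /pt; case: ifP; [|case: ifP]. Qed.
Lemma ipt_shape : shape3 (ipt m).
Proof. by rewrite /ipt; case: ifP; [|case: ifP]. Qed.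

Lemma pt_down : isUp m -> isDown (pt m).
Proof. dest Hm; rewrite /isUp /isDown /pt /=; boolcase => /=; lia. Qed.

Lemma ipt_pt : isUp m -> ipt (pt m) = m.
Proof.
dest Hm; rewrite /isUp /pt /ipt /=; boolcase => //=; rewrite /mk;
  repeat case: ifP => //=; (try lia); intros; splitH; rewrite ?subSS ?subn0 //.
Qed.

Lemma ipt_up : isDown m -> isUp (ipt m).
Proof. dest Hm; rewrite /isUp /isDown /ipt /=; boolcase => /=; repeat case: ifP => //=; lia. Qed.

Lemma pt_ipt : isDown m -> pt (ipt m) = m.
Proof.
dest Hm; rewrite /isDown /pt /ipt /=; boolcase => //=; rewrite /mk;
  repeat case: ifP => //=; (try lia); intros; splitH; rewrite ?subSS ?subn0 //; repeat f_equal; lia.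
Qed.

Lemma pt_qdeg : isUp m -> qdeg 3 (pt m) = qdeg 3 m.
Proof. dest Hm; rewrite /isUp /pt /=; boolcase => //=; rewrite !qdegE; lia. Qed.

Lemma pt_tdeg : isUp m -> (tdeg 3 (pt m)).+1 = tdeg 3 m.
Proof. dest Hm; rewrite /isUp /pt /=; boolcase => //=; rewrite !tdegE; lia. Qed.

End S.

Local Open Scope ring_scope.

Ltac ifcase := repeat match goal with |- context [if ?c then _ else _] =>
  let E := fresh "E" in case E: c;
  [try (move/eqP: E => E; injection E; intros; lia) | try by rewrite eqxx in E] end.

Lemma supp l m : coef l m != 0 -> m \in [seq p.2 | p <- l].
Proof.
rewrite /coef; elim: l => [|p l IH]; first by rewrite big_nil eqxx.
rewrite big_cons /= inE; case: (p.2 =P m) => [<- _|_ /IH ->]; by rewrite ?eqxx ?orbT.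
Qed.

Lemma d2_deg m y : shape3 m -> y \in [seq p.2 | p <- d2 3 m] ->
  [&& shape3 y, qdeg 3 y == qdeg 3 m & (tdeg 3 y).+1 == tdeg 3 m].
Proof.
move=> Hm; dest Hm; boolcase; rewrite /= ?inE //;
 repeat (case/orP; [move/eqP => -> |]); try (move/eqP => ->);
 rewrite /shape3 /qdeg /tdeg /=; lia.
Qed.

Lemma d2_basis a b m y : m \in basis 3 a b.+1 -> y \in [seq p.2 | p <- d2 3 m] ->
  y \in basis 3 a b.
Proof.
rewrite !mem_basis => /and3P[Hm /eqP qa /eqP tb] Hy.
case/and3P: (d2_deg Hm Hy) => -> /eqP -> /eqP; rewrite qa tb eqxx /=.
by move=> [->].
Qed.

Lemma coef_pt m : shape3 m -> isUp m -> coef (d2 3 m) (pt m) != 0.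
Proof.
move=> Hm; dest Hm; boolcase; rewrite /isUp /coef /pt /= ?big_cons ?big_nil /= => Hu;
 ifcase; rewrite ?expr0 ?expr1 ?sqrrN ?expr1n; apply/negP => /eqP H; try lra;
 exfalso; lia.
Qed.

Lemma tri x y : shape3 x -> shape3 y -> isUp x -> isUp y -> x != y ->
  pt x \in [seq p.2 | p <- d2 3 y] -> (lv x < lv y)%N.
Proof.
move=> Hx Hy; case: (shape3P Hx) => [a0 [a1 [a2 [u0 [u1 [u2 ->]]]]]].
case: (shape3P Hy) => [b0 [b1 [b2 [v0 [v1 [v2 ->]]]]]].
rewrite mk_eq.
case: u0; case: u1; case: u2; case: v0; case: v1; case: v2;
rewrite /isUp /pt /lv /= ?inE ?xpair_eqE ?eqseq_cons /=; repeat case: ifP; lia.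
Qed.

Lemma crit_even m : shape3 m -> isCrit m -> ~~ odd (tdeg 3 m) -> d2 3 m = [::].
Proof.
move=> Hm; dest Hm; rewrite tdegE /isCrit /isUp /isDown; boolcase => //=; lia.
Qed.

Lemma crit_gap x y : shape3 x -> shape3 y -> isCrit x -> isCrit y ->
  qdeg 3 x = qdeg 3 y -> (tdeg 3 y).+1 = tdeg 3 x -> odd (tdeg 3 x) -> False.
Proof.
move=> Hx Hy; case: (shape3P Hx) => [a0 [a1 [a2 [u0 [u1 [u2 ->]]]]]].
case: (shape3P Hy) => [b0 [b1 [b2 [v0 [v1 [v2 ->]]]]]].
rewrite !qdegE !tdegE /isCrit /isUp /isDown.
case: u0; case: u1; case: u2; case: v0; case: v1; case: v2 => /=; lia.
Qed.

Lemma coefL l z : coef l z = \sum_(p <- l) (p.2 == z)%:R * p.1.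
Proof. by rewrite /coef big_mkcond; apply: eq_bigr => p _; case: eqP; rewrite ?mul1r ?mul0r. Qed.

Lemma dd0 m z : shape3 m -> \sum_(p <- d2 3 m) p.1 * coef (d2 3 p.2) z = 0.
Proof.
move=> Hm; dest Hm; boolcase; rewrite /= ?big_cons ?big_nil //= !coefL /= ?big_cons ?big_nil /=;
 ring.
Qed.

End PM2.
Import PM2.

Module PM3.
Local Open Scope ring_scope.

Lemma tri_free k (T : 'M[rat]_k) (lv : 'I_k -> nat) :
  (forall i, T i i != 0) -> (forall i j, i != j -> T j i != 0 -> (lv i < lv j)%N) ->
  row_free T.
Proof.
move=> hd ht; rewrite -kermx_eq0; apply/eqP/row_matrixP => r; rewrite row0.
set v := row r (kermx T).
have hv : v *m T = 0 by rewrite /v -row_mul mulmx_ker row0.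
apply/rowP => i0; rewrite [RHS]mxE.
apply/eqP/negPn/negP => nz.
case: (@arg_maxnP _ i0 (fun i => v 0 i != 0) (fun i => lv i) nz) => i nzi maxi.
have := congr1 (fun w : 'rV_k => w 0 i) hv; rewrite !mxE (bigD1 i) //= big1 ?addr0.
  by move/eqP; rewrite mulf_eq0 (negPf nzi) (negPf (hd i)).
move=> j nji; case: (v 0 j =P 0) => [->|/eqP vj]; first by rewrite mul0r.
case: (T j i =P 0) => [->|/eqP tji]; first by rewrite mulr0.
have nij : i != j by rewrite eq_sym.
have := ht i j nij tji; have := maxi j vj; lia.
Qed.

Lemma tri_rank m n k (M : 'M[rat]_(m, n)) (p : 'I_k -> 'I_m) (q : 'I_k -> 'I_n)
  (lv : 'I_k -> nat) :
  (forall i, M (p i) (q i) != 0) ->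
  (forall i j, i != j -> M (p j) (q i) != 0 -> (lv i < lv j)%N) ->
  (k <= \rank M)%N.
Proof.
move=> hd ht.
have hf : row_free (mxsub p q M).
  by apply: (@tri_free _ _ lv) => [i|i j]; rewrite mxE; [exact: hd|exact: ht].
move/eqP: hf => <-; rewrite mxsubrc.
apply: leq_trans (mxrankS (rowsub_sub _ _)) _.
have -> : colsub q M = M *m colsub q 1%:M by rewrite mulmx_colsub mulmx1.
exact: mxrankM_maxl.
Qed.

Section SeqMat.
Variables (X : eqType) (x0 : X) (c : X -> X -> rat).

Definition Mat (s s' : seq X) : 'M[rat]_(size s, size s') :=
  \matrix_(i, j) c (nth x0 s i) (nth x0 s' j).

Lemma up_rank s s' (up : pred X) (pt : X -> X) (lv : X -> nat) :
  uniq s -> (forall x, x \in s -> up x -> pt x \in s') ->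
  (forall x, x \in s -> up x -> c x (pt x) != 0) ->
  (forall x y, x \in s -> y \in s -> up x -> up y -> x != y -> c y (pt x) != 0 ->
     (lv x < lv y)%N) ->
  (count up s <= \rank (Mat s s'))%N.
Proof.
move=> us hin hc ht.
set U := filter up s.
have hU : forall i : 'I_(count up s), nth x0 U i \in s /\ up (nth x0 U i).
  move=> i; have : nth x0 U i \in U by rewrite mem_nth // size_filter.
  by rewrite mem_filter => /andP[].
have hp : forall i : 'I_(count up s), (index (nth x0 U i) s < size s)%N.
  by move=> i; rewrite index_mem; case: (hU i).
have hq : forall i : 'I_(count up s), (index (pt (nth x0 U i)) s' < size s')%N.
  by move=> i; rewrite index_mem; case: (hU i) => h1 h2; apply: hin.
pose p i := Ordinal (hp i). pose q i := Ordinal (hq i).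
have hE : forall i j, Mat s s' (p i) (q j) = c (nth x0 U i) (pt (nth x0 U j)).
  move=> i j; rewrite mxE /= (nth_index _ (proj1 (hU i))).
  by rewrite (nth_index _ (hin _ (proj1 (hU j)) (proj2 (hU j)))).
apply: (@tri_rank _ _ _ _ p q (fun i => lv (nth x0 U i))) => [i|i j nij].
  by rewrite hE; case: (hU i) => h1 h2; apply: hc.
rewrite hE; case: (hU i) => hi1 hi2; case: (hU j) => hj1 hj2.
apply: ht => //.
rewrite nth_uniq ?size_filter ?ltn_ord //; last exact: filter_uniq.
Qed.


Lemma down_rank s2 s1 s0 (up : pred X) (pt : X -> X) (lv : X -> nat) :
  uniq s2 -> uniq s1 ->
  Mat s2 s1 *m Mat s1 s0 = 0 ->
  (forall x, x \in s2 -> up x -> pt x \in s1) ->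
  (forall x x', x \in s2 -> x' \in s2 -> up x -> up x' -> pt x = pt x' -> x = x') ->
  (forall x, x \in s2 -> up x -> c x (pt x) != 0) ->
  (forall x y, x \in s2 -> y \in s2 -> up x -> up y -> x != y -> c y (pt x) != 0 ->
     (lv x < lv y)%N) ->
  (forall y, y \in s1 -> ~~ up y -> (forall x, x \in s2 -> up x -> pt x != y) ->
     forall z, c y z = 0) ->
  (\rank (Mat s1 s0) <= count up s1)%N.
Proof.
move=> us2 us1 hdd hin hinj hc ht hz.
set D := Mat s1 s0; set E := Mat s2 s1.
set U1 := filter up s1; set U2 := filter up s2.
have hU1 : forall i : 'I_(count up s1), nth x0 U1 i \in s1 /\ up (nth x0 U1 i).
  move=> i; have : nth x0 U1 i \in U1 by rewrite mem_nth // size_filter.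
  by rewrite mem_filter => /andP[].
have hU2 : forall i : 'I_(count up s2), nth x0 U2 i \in s2 /\ up (nth x0 U2 i).
  move=> i; have : nth x0 U2 i \in U2 by rewrite mem_nth // size_filter.
  by rewrite mem_filter => /andP[].
have hp1 : forall i : 'I_(count up s1), (index (nth x0 U1 i) s1 < size s1)%N.
  by move=> i; rewrite index_mem; case: (hU1 i).
have hp2 : forall i : 'I_(count up s2), (index (nth x0 U2 i) s2 < size s2)%N.
  by move=> i; rewrite index_mem; case: (hU2 i).
have hq2 : forall i : 'I_(count up s2), (index (pt (nth x0 U2 i)) s1 < size s1)%N.
  by move=> i; rewrite index_mem; case: (hU2 i) => h1 h2; apply: hin.
pose p1 i := Ordinal (hp1 i). pose p2 i := Ordinal (hp2 i). pose q2 i := Ordinal (hq2 i).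
set P := rowsub p1 D.
have hup : forall r : 'I_(size s1), up (nth x0 s1 r) -> (row r D <= P)%MS.
  move=> r ur.
  have hi : (index (nth x0 s1 r) U1 < count up s1)%N.
    by rewrite -size_filter index_mem mem_filter ur mem_nth.
  have -> : r = p1 (Ordinal hi).
    apply: val_inj => /=; rewrite nth_index ?index_uniq //.
    by rewrite mem_filter ur mem_nth.
  by rewrite -row_rowsub row_sub.
have hq2r : forall j, nth x0 s1 (q2 j) = pt (nth x0 U2 j).
  move=> j; rewrite /= nth_index //; case: (hU2 j) => h1 h2; exact: hin.
have hrest : forall r : 'I_(size s1), r \notin [set q2 j | j in setT] -> (row r D <= P)%MS.
  move=> r nr; case ur: (up (nth x0 s1 r)); first exact: hup.
  suff -> : row r D = 0 by apply: sub0mx.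
  apply/rowP => z; rewrite !mxE; apply: hz; rewrite ?mem_nth ?ur //.
  move=> x xs ux; apply/eqP => ex; move/negP: nr; apply.
  have hi : (index x U2 < count up s2)%N by rewrite -size_filter index_mem mem_filter ux.
  apply/imsetP; exists (Ordinal hi) => //; apply: val_inj => /=.
  rewrite nth_index ?mem_filter ?ux // ex index_uniq //.
have hT : forall i j, E (p2 i) (q2 j) = c (nth x0 U2 i) (pt (nth x0 U2 j)).
  move=> i j; rewrite mxE hq2r /= nth_index //; by case: (hU2 i).
set T := mxsub p2 q2 E.
have hTf : row_free T.
  apply: (@tri_free _ _ (fun i => lv (nth x0 U2 i))) => [i|i j nij]; rewrite mxE hT.
    by case: (hU2 i) => h1 h2; apply: hc.
  case: (hU2 i) => hi1 hi2; case: (hU2 j) => hj1 hj2; apply: ht => //.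
  rewrite nth_uniq ?size_filter ?ltn_ord //; last exact: filter_uniq.
set Q := rowsub q2 D.
have hTQ : (T *m Q <= P)%MS.
  apply/row_subP => i; rewrite row_mul mulmx_sum_row.
  have h0 : row (p2 i) E *m D = 0 by rewrite -row_mul hdd row0.
  rewrite mulmx_sum_row (bigID (fun r => r \in [set q2 j | j in setT])) /= in h0.
  rewrite big_imset /= in h0; last first.
    move=> j j' _ _ /(congr1 (fun r : 'I_(size s1) => nth x0 s1 r)); rewrite !hq2r.
    case: (hU2 j) => h1 h2; case: (hU2 j') => h1' h2' /(hinj _ _ h1 h1' h2 h2') e.
    apply: val_inj; apply/eqP; rewrite -(nth_uniq x0 (s:=U2)) ?size_filter ?ltn_ord ?filter_uniq //.
    by rewrite e.
  have -> : \sum_j row i T 0 j *: row j Q =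
            \sum_(j in [set: 'I_(count up s2)]) row (p2 i) E 0 (q2 j) *: row (q2 j) D.
    rewrite [RHS](eq_bigl xpredT) => [|j]; last by rewrite inE.
    by apply: eq_bigr => j _; rewrite !mxE row_rowsub.
  move/eqP: h0; rewrite addr_eq0 => /eqP ->.
  rewrite -scaleN1r; apply: scalemx_sub; apply: summx_sub => r nr.
  by apply: scalemx_sub; apply: hrest.
have hQ : (Q <= P)%MS.
  have hTu : T \in unitmx by rewrite -row_free_unit.
  by rewrite -(mulKmx hTu Q); apply: submx_trans (submxMl _ _) hTQ.
have hDP : (D <= P)%MS.
  apply/row_subP => r.
  case: (boolP (r \in [set q2 j | j in setT])) => [/imsetP [j _ ->]|nr]; last exact: hrest.
  by rewrite -row_rowsub; apply: submx_trans (row_sub _ _) hQ.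
by apply: leq_trans (mxrankS hDP) (rank_leq_row _).
Qed.

End SeqMat.

End PM3.
Import PM3.

Module PM4.
Local Open Scope ring_scope.

Definition cf (m m' : mono) : rat := coef (d2 3 m) m'.

Lemma dmatE a b : dmat 3 a b = Mat dflt_mono cf (basis 3 a b) (tgt 3 a b).
Proof. by []. Qed.

Lemma sum_nth (s : seq mono) (F : mono -> rat) :
  \sum_(j < size s) F (nth dflt_mono s j) = \sum_(y <- s) F y.
Proof. by rewrite (big_nth dflt_mono) big_mkord. Qed.

Lemma coef_sum (s : seq mono) l (f : mono -> rat) : uniq s ->
  {subset [seq p.2 | p <- l] <= s} ->
  \sum_(y <- s) coef l y * f y = \sum_(p <- l) p.1 * f p.2.
Proof.
move=> us hs.
transitivity (\sum_(y <- s) \sum_(p <- l) (p.2 == y)%:R * p.1 * f y).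
  apply: eq_bigr => y _; by rewrite coefL big_distrl.
rewrite exchange_big; apply: eq_big_seq => p hpl.
have hp : p.2 \in s by apply: hs; apply: map_f.
rewrite (bigD1_seq p.2) //= eqxx mul1r big1 ?addr0 // => y ny.
by rewrite eq_sym (negPf ny) mul0r mul0r.
Qed.

Lemma dmat_dd a b : dmat 3 a b.+1 *m dmat 3 a b = 0.
Proof.
apply/matrixP => i k; rewrite !dmatE !mxE /Mat; under eq_bigr do rewrite !mxE; rewrite [tgt 3 a b.+1]/tgt.
pose F := fun y => cf (nth dflt_mono (basis 3 a b.+1) i) y * cf y (nth dflt_mono (tgt 3 a b) k).
rewrite -[LHS]/(\sum_(j < size (basis 3 a b)) F (nth dflt_mono (basis 3 a b) j)) sum_nth /F.
have hx : nth dflt_mono (basis 3 a b.+1) i \in basis 3 a b.+1 by rewrite mem_nth.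
rewrite /cf coef_sum ?uniq_basis //.
  by apply: dd0; move: hx; rewrite mem_basis => /and3P[].
by move=> y hy; apply: d2_basis hx hy.
Qed.

Definition uc a b := count isUp (basis 3 a b).
Definition dc a b := count isDown (basis 3 a b).
Definition cc a b := count isCrit (basis 3 a b).

Lemma basis_shape a b x : x \in basis 3 a b -> shape3 x.
Proof. by rewrite mem_basis => /and3P[]. Qed.

Lemma up_pt_basis a b x : x \in basis 3 a b.+1 -> isUp x -> pt x \in basis 3 a b.
Proof.
rewrite !mem_basis => /and3P[hs /eqP hq /eqP ht] ux.
rewrite pt_shape // pt_qdeg // hq eqxx /=.
by have := pt_tdeg hs ux; rewrite ht => -[->].
Qed.


Lemma up_b0 a x : x \in basis 3 a 0 -> isUp x -> False.
Proof.
rewrite mem_basis => /and3P[hs _ /eqP ht] ux.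
by have := pt_tdeg hs ux; rewrite ht.
Qed.

Lemma rank_lb a b : (uc a b <= \rank (dmat 3 a b))%N.
Proof.
rewrite dmatE; apply: (@up_rank _ _ _ _ _ isUp pt lv) => //.
- exact: uniq_basis.
- move=> x hx ux; case: b hx => [|b] hx; first by case: (up_b0 hx ux).
  exact: up_pt_basis.
- move=> x hx ux; apply: coef_pt => //; exact: basis_shape hx.
- move=> x y hx hy ux uy nxy /supp h; apply: tri => //; [exact: basis_shape hx|exact: basis_shape hy].
Qed.

Lemma rank_dd a b : (\rank (dmat 3 a b.+1) + \rank (dmat 3 a b) <= size (basis 3 a b))%N.
Proof.
have := dmat_dd a b; move/eqP; rewrite -sub_kermx => /mxrankS; rewrite mxrank_ker.
have := rank_leq_row (dmat 3 a b); rewrite /tgt /=; lia.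
Qed.

Lemma count_split a b : size (basis 3 a b) = (uc a b + dc a b + cc a b)%N.
Proof.
rewrite -(count_predC isUp) /uc -addnA; congr (_ + _)%N.
rewrite /dc /cc -count_predUI.
rewrite (@eq_count _ (predI _ _) pred0) ?count_pred0 ?addn0; last first.
  by move=> x /=; rewrite /isCrit; case: (isDown x); rewrite ?andbF.
apply: eq_count => x /=; rewrite /isCrit.
by case ux: (isUp x); case dx: (isDown x) => //=; move: (up_down ux); rewrite dx.
Qed.

Lemma dc_uc a b : dc a b = uc a b.+1.
Proof.
rewrite /dc /uc -!size_filter.
rewrite -(size_map ipt); apply: perm_size; apply: uniq_perm.
- rewrite map_inj_in_uniq; first exact/filter_uniq/uniq_basis.
  move=> x y hx' hy'; move: hx'; rewrite mem_filter => /andP[dx hx].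
  move: hy'; rewrite mem_filter => /andP[dy hy] e.
  by rewrite -(pt_ipt (basis_shape hx) dx) -(pt_ipt (basis_shape hy) dy) e.
- exact/filter_uniq/uniq_basis.
move=> x; apply/mapP/idP.
  case=> y; rewrite mem_filter => /andP[dy hy] ->.
  have hs := basis_shape hy.
  rewrite mem_filter ipt_up //= mem_basis ipt_shape //=.
  move: hy; rewrite mem_basis => /and3P[_ /eqP hq /eqP ht].
  have e := pt_ipt hs dy.
  have := pt_qdeg (ipt_shape y) (ipt_up hs dy); rewrite e hq => ->.
  have := pt_tdeg (ipt_shape y) (ipt_up hs dy); rewrite e ht => <-.
  by rewrite !eqxx.
rewrite mem_filter => /andP[ux hx]; exists (pt x).
  by rewrite mem_filter pt_down ?(basis_shape hx) //= up_pt_basis.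
by rewrite ipt_pt // (basis_shape hx).
Qed.

Lemma rank_ub_even a b : ~~ odd b -> (\rank (dmat 3 a b) <= uc a b)%N.
Proof.
move=> eb; rewrite dmatE.
apply: (@down_rank _ _ _ (basis 3 a b.+1) _ _ isUp pt lv).
- exact: uniq_basis.
- exact: uniq_basis.
- exact: dmat_dd.
- move=> x hx ux; exact: up_pt_basis.
- move=> x x' hx hx' ux ux' e.
  by rewrite -(ipt_pt (basis_shape hx) ux) e ipt_pt // (basis_shape hx').
- move=> x hx ux; apply: coef_pt => //; exact: basis_shape hx.
- move=> x y hx hy ux uy nxy /supp h; apply: tri => //; [exact: basis_shape hx|exact: basis_shape hy].
move=> y hy uy hnot z.
have hs := basis_shape hy.
have dy : ~~ isDown y.
  apply/negP => dy; have hx : ipt y \in basis 3 a b.+1.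
    move: hy; rewrite !mem_basis ipt_shape //= => /and3P[_ /eqP hq /eqP ht].
    have e := pt_ipt hs dy.
    have := pt_qdeg (ipt_shape y) (ipt_up hs dy); rewrite e hq => ->.
    have := pt_tdeg (ipt_shape y) (ipt_up hs dy); rewrite e ht => <-.
    by rewrite !eqxx.
  by move: (hnot _ hx (ipt_up hs dy)); rewrite pt_ipt // eqxx.
have cy : isCrit y by rewrite /isCrit uy dy.
have ty : ~~ odd (tdeg 3 y) by move: hy; rewrite mem_basis => /and3P[_ _ /eqP ->].
by rewrite /cf (crit_even hs cy ty) /coef big_nil.
Qed.

Lemma cc_gap a b : (0 < cc a b.+1)%N -> (0 < cc a b)%N -> odd b.+1 -> False.
Proof.
rewrite /cc -!has_count => /hasP[x hx cx] /hasP[y hy cy] ob.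
move: hx hy; rewrite !mem_basis => /and3P[hxs /eqP qx /eqP tx] /and3P[hys /eqP qy /eqP ty].
apply: (crit_gap hxs hys cx cy); rewrite ?qx ?qy ?tx ?ty //.
Qed.

Lemma rank_exact a b : \rank (dmat 3 a b) = uc a b.
Proof.
apply/eqP; rewrite eqn_leq rank_lb andbT.
case: (boolP (odd b)) => ob; last exact: rank_ub_even.
case: b ob => [//|b] ob.
have h1 := rank_dd a b. have h2 := rank_dd a b.+1.
have l1 := rank_lb a b. have l2 := rank_lb a b.+2.
have s1 := count_split a b. have s2 := count_split a b.+1.
have d1 := dc_uc a b. have d2 := dc_uc a b.+1.
case: (posnP (cc a b)) => c1.
  lia.
case: (posnP (cc a b.+1)) => c2.
  lia.
by case: (cc_gap c2 c1 ob).
Qed.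

Lemma Kh_crit a b : Khdim 3 a b = cc a b.
Proof.
rewrite /Khdim mxrank_ker !rank_exact.
have := count_split a b; have := dc_uc a b; lia.
Qed.

End PM4.
Import PM4.

Module PM5.

Definition hitb (q0 t0 a b : nat) : bool :=
  [exists j : 'I_a.+1, (a == q0 + 6 * j) && (b == t0 + 4 * j)].

Lemma hitbP q0 t0 a b :
  reflect (exists j, a = q0 + 6 * j /\ b = t0 + 4 * j) (hitb q0 t0 a b).
Proof.
apply: (iffP existsP) => [[j /andP[/eqP h1 /eqP h2]]|[j [h1 h2]]]; first by exists j.
have hj : j < a.+1 by lia.
by exists (Ordinal hj); rewrite /= h1 h2 !eqxx.
Qed.

Definition famf (e i : nat) (s : bool) (x : mono) : bool :=
  [&& isCrit x, E x 0 == e, E x 1 == i & Sb x 1 == s].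

Lemma count_fam e i (s : bool) a b : (e <= 1) -> (i <= 1) ->
  ~~ ((e == 1) && (i == 1) && ~~ s) -> ~~ ((e == 0) && (i == 0) && s) ->
  count (famf e i s) (basis 3 a b) = hitb (2*e + 4*i + 6*s) (2*i + 3*s) a b.
Proof.
move=> he hi h1 h2.
case: hitbP => [[j [ha hb]]|nh].
  pose x0 := mk e i j false s false.
  have hx0 : x0 \in basis 3 a b.
    rewrite /x0 mem_basis qdegE tdegE shape3_mk /=; case: s {h1 h2 x0} ha hb => /=; lia.
  transitivity (count_mem x0 (basis 3 a b)); last by rewrite count_uniq_mem ?uniq_basis ?hx0.
  apply: eq_in_count => x hx.
  move: hx; rewrite mem_basis => /and3P[hsx /eqP qa /eqP tb].
  case: (shape3P hsx) qa tb => [f0 [f1 [f2 [t0 [t1 [t2 Ex]]]]]]; subst x.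
  rewrite qdegE tdegE /famf /isCrit /isUp /isDown /= /x0 mk_eq => qa tb.
  clear hx0 hsx; case: s {x0} h1 h2 ha hb; case: t0 t1 t2 qa tb => [] [] [] /= qa tb; lia.
apply/eqP; rewrite -leqn0 leqNgt -has_count; apply/hasP => -[x hx].
move: hx; rewrite mem_basis => /and3P[hsx /eqP qa /eqP tb].
case: (shape3P hsx) qa tb => [f0 [f1 [f2 [t0 [t1 [t2 Ex]]]]]]; subst x.
rewrite qdegE tdegE /famf /isCrit /isUp /isDown /= => qa tb hf.
apply: nh; exists f2.
clear hsx; case: s h1 h2 hf; case: t0 t1 t2 qa tb => [] [] [] /= qa tb; lia.
Qed.

Lemma crit_fam x : shape3 x ->
  (isCrit x : nat) = (famf 0 0 false x + famf 1 0 false x + famf 0 1 false x +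
    famf 0 1 true x + famf 1 1 true x + famf 1 0 true x)%N.
Proof.
move=> hs; dest hs; rewrite /famf /isCrit /isUp /isDown /=.
case: s0; case: s1; case: s2 => /=; try lia.
Qed.

Lemma cc_split a b : count isCrit (basis 3 a b) =
  (count (famf 0 0 false) (basis 3 a b) + count (famf 1 0 false) (basis 3 a b) +
   count (famf 0 1 false) (basis 3 a b) + count (famf 0 1 true) (basis 3 a b) +
   count (famf 1 1 true) (basis 3 a b) + count (famf 1 0 true) (basis 3 a b))%N.
Proof.
have : all shape3 (basis 3 a b) by apply/allP => x; rewrite mem_basis => /and3P[].
elim: (basis 3 a b) => [|x s IH] //= /andP[hx hs].
rewrite (crit_fam hx) (IH hs); lia.
Qed.

Local Open Scope ring_scope.

Lemma smul_ext (F F' G : bser) a b : (forall i j, F i j = F' i j) ->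
  smul F G a b = smul F' G a b.
Proof. by move=> h; apply: eq_bigr => i _; apply: eq_bigr => j _; rewrite h. Qed.

Lemma smulDl (F F' G : bser) a b :
  smul (sadd F F') G a b = smul F G a b + smul F' G a b.
Proof.
rewrite /smul -big_split /=; apply: eq_bigr => i _.
by rewrite -big_split /=; apply: eq_bigr => j _; rewrite /sadd mulrDl.
Qed.

Lemma sum_if n i (F : nat -> int) :
  \sum_(k < n) (if (k == i :> nat) then F k else 0) = if (i < n)%N then F i else 0.
Proof.
rewrite -(big_mkord xpredT (fun k => if k == i then F k else 0)).
case: ifP => hi.
  have hm : i \in index_iota 0 n by rewrite mem_iota /= subn0 add0n hi.
  rewrite (bigD1_seq i hm (iota_uniq _ _)) /=.
  rewrite big1 ?addr0; first by case: eqP.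
  by move=> k; case: eqP => // -> /eqP.
rewrite big_seq_cond big1 // => k /andP[]; rewrite mem_iota => hk _; case: eqP => // ek.
by move: hi hk; rewrite ek; lia.
Qed.

Lemma smul_mono c i j (G : bser) a b :
  smul (smono c i j) G a b = if (i <= a)%N && (j <= b)%N then c * G (a - i)%N (b - j)%N else 0.
Proof.
rewrite /smul /smono.
transitivity (\sum_(k < a.+1) if (k == i :> nat) then
     (if (j < b.+1)%N then c * G (a - i)%N (b - j)%N else 0) else 0).
  apply: eq_bigr => k _; case: (k =P i :> nat) => [ek|nk].
    rewrite -(sum_if _ _ (fun l => c * G (a - i)%N (b - l)%N)); apply: eq_bigr => l _; rewrite ek; case: (i =P i) => // _ /=.
    by case: (l =P j :> nat) => [->|]; rewrite ?mul0r.
  by apply: big1 => l _; case: (k =P i :> nat) => // _; rewrite mul0r.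
rewrite (sum_if _ _ (fun _ => if (j < b.+1)%N then c * G (a - i)%N (b - j)%N else 0)) !ltnS; by case: (i <= a)%N.
Qed.

Lemma sgeomP x y : sgeom 6 4 x y = (hitb 0 0 x y)%:Z.
Proof.
rewrite /sgeom; case: existsP => [[m /andP[/eqP h1 /eqP h2]]|hn].
  by case: hitbP => // -[]; exists m; split; lia.
case: hitbP => // -[m [h1 h2]]; exfalso; apply: hn.
have hm : (m < (x + y).+1)%N by lia.
by exists (Ordinal hm); rewrite /= h1 h2 !eqxx.
Qed.

Lemma term q0 t0 a b :
  smul (smono 1 q0 t0) (sgeom 6 4) a b = (hitb q0 t0 a b)%:Z.
Proof.
rewrite smul_mono sgeomP mul1r; case: ifP => [/andP[h1 h2]|hn].
  congr (_%:Z); case: hitbP => [[m [e1 e2]]|n1]; case: hitbP => [[m' [e1' e2']]|n2] //.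
    by exfalso; apply: n2; exists m; lia.
  by exfalso; apply: n1; exists m'; lia.
case: hitbP => // -[m [e1 e2]]; move: hn; lia.
Qed.

End PM5.
Import PM5.

Module PT6.
Local Open Scope ring_scope.

Lemma smono1 p q i j : smono 1 p q i j = (((i == p) && (j == q)) : nat)%:Z.
Proof. by rewrite /smono; case: ifP. Qed.

Definition Z6 : bser :=
  sadd (sadd (sadd (sadd (sadd (smono 1 0 0) (smono 1 2 0)) (smono 1 4 2))
     (smono 1 10 5)) (smono 1 12 5)) (smono 1 14 7).

Lemma subeq (p r i : nat) : (p <= i)%N -> ((i - p)%N == r) = (i == (p + r)%N).
Proof. move=> h; apply/eqP/eqP; lia. Qed.

Lemma XY i j : smul (sadd (smono 1 0 0) (smono 1 10 5))
                   (sadd (sadd (smono 1 0 0) (smono 1 2 0)) (smono 1 4 2)) i j = Z6 i j.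
Proof.
rewrite smulDl !smul_mono /Z6 /sadd !smono1 !mul1r !subn0 /=.
case: ifP => h.
  have h1 : (10 <= i)%N by lia.
  have h2 : (5 <= j)%N by lia.
  rewrite !(subeq _ h1) !(subeq _ h2) /=.
  ring.
have e1 : ((i == 10) && (j == 5)) = false by lia.
have e2 : ((i == 12) && (j == 5)) = false by lia.
have e3 : ((i == 14) && (j == 7)) = false by lia.
rewrite e1 e2 e3 /=; ring.
Qed.

Lemma P3E a b : P3 a b = (hitb 0 0 a b + hitb 2 0 a b + hitb 4 2 a b + hitb 10 5 a b +
   hitb 12 5 a b + hitb 14 7 a b : nat)%:Z + smono 1 8 3 a b.
Proof.
rewrite /P3 {1}/sadd (@smul_ext _ Z6 (sgeom 6 4) a b XY) /Z6 !smulDl !term.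
by rewrite !PoszD.
Qed.

Lemma hit8 a b : hitb 8 3 a b = (hitb 14 7 a b + ((a == 8) && (b == 3)) : nat)%N :> nat.
Proof.
case: (hitbP 8 3) => [[m [e1 e2]]|n1]; case: (hitbP 14 7) => [[m' [e1' e2']]|n2] /=.
- lia.
- case: m e1 e2 => [|m] e1 e2; first by rewrite e1 e2.
  by exfalso; apply: n2; exists m; lia.
- by exfalso; apply: n1; exists m'.+1; lia.
- case: eqP => [ea|]; case: eqP => [eb|] //=.
  by exfalso; apply: n1; exists 0%N; lia.
Qed.

End PT6.
Import PT6.

Module PF.
Lemma cf1 a b : count (famf 0 0 false) (basis 3 a b) = hitb 0 0 a b.
Proof. by rewrite count_fam. Qed.
Lemma cf2 a b : count (famf 1 0 false) (basis 3 a b) = hitb 2 0 a b.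
Proof. by rewrite count_fam. Qed.
Lemma cf3 a b : count (famf 0 1 false) (basis 3 a b) = hitb 4 2 a b.
Proof. by rewrite count_fam. Qed.
Lemma cf4 a b : count (famf 0 1 true) (basis 3 a b) = hitb 10 5 a b.
Proof. by rewrite count_fam. Qed.
Lemma cf5 a b : count (famf 1 1 true) (basis 3 a b) = hitb 12 5 a b.
Proof. by rewrite count_fam. Qed.
Lemma cf6 a b : count (famf 1 0 true) (basis 3 a b) = hitb 8 3 a b.
Proof. by rewrite count_fam. Qed.

End PF.
Import PF.

Theorem mainTheorem4 : forall a b : nat, ((Khdim 3 a b)%:Z)%R = P3 a b.
Proof.
move=> a b; rewrite Kh_crit /cc cc_split cf1 cf2 cf3 cf4 cf5 cf6 P3E hit8 smono1 -!PoszD.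
congr Posz; lia.
Qed.
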